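(* Fix $n \ge n_0$ where $n_0$ is a sufficiently large universal constant. Let $G$ be drawn uniformly at random from $\mathcal{G}_{2n}$. With probability at least $1 - \frac{1}{n}$, $G$ is $\beta$-balanced for $\beta = 8 n$.
   Context: Fix disjoint vertex sets $L,R$ with $|L|=|R|=n$ and a fixed perfect matching $M$ of directed edges from $L$ to $R$. $\mathcal{G}_{2n}$ is the set of all unweighted directed graphs on vertex set $L\cup R$ whose set of edges from $L$ to $R$ is exactly $M$, whose edges from $R$ to $L$ form an arbitrary subset of $R\times L$, and which have no other edges (equivalently, a uniform element includes each pair $(v,u)\in R\times L$ as an edge independently with probability $1/2$). An unweighted directed graph is $\beta$-balanced if it is strongly connected and for every $\varnothing\ne S\subsetneq V$ the number of edges leaving $S$ is at most $\beta$ times the number of edges entering $S$. *)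

(* Defs.v *)
From mathcomp Require Import all_boot all_order all_fingroup all_algebra.
Set Implicit Arguments. Unset Strict Implicit. Unset Printing Implicit Defensive.

(* Vertex set L ∪ R: inl i is the i-th vertex of L, inr j the j-th of R. *)
Definition vtx (n : nat) : finType := ('I_n + 'I_n)%type.

(* The graph of G_{2n} determined by the perfect matching M (edges inl i -> inr (M i))
   and the set E ⊆ R × L of backward edges ((j,i) ∈ E means edge inr j -> inl i). *)
Definition gadj (n : nat) (M : {perm 'I_n}) (E : {set 'I_n * 'I_n}) : rel (vtx n) :=
  fun u v =>
    match u, v with
    | inl i, inr j => M i == j
    | inr j, inl i => (j, i) \in E
    | _, _ => false
    end.

Definition strongly_connected (T : finType) (e : rel T) : bool :=
  [forall u : T, forall v : T, connect e u v].

Definition out_edges (T : finType) (e : rel T) (S : {set T}) : nat :=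
  #|[set p : T * T | [&& e p.1 p.2, p.1 \in S & p.2 \notin S]]|.
Definition in_edges (T : finType) (e : rel T) (S : {set T}) : nat :=
  #|[set p : T * T | [&& e p.1 p.2, p.1 \notin S & p.2 \in S]]|.

Definition balanced (T : finType) (e : rel T) (beta : nat) : bool :=
  strongly_connected e &&
  [forall S : {set T}, (S != set0) ==> (S != setT) ==>
    (out_edges e S <= beta * in_edges e S)].

Definition prob_E (n : nat) (P : pred {set 'I_n * 'I_n}) : rat :=
  (#|[set E : {set 'I_n * 'I_n} | P E]|%:R /
   #|{set 'I_n * 'I_n}|%:R)%R.

(* Main.v *)
Require Import Defs.
From mathcomp Require Import all_boot all_order all_fingroup all_algebra.
From mathcomp Require Import zify.
From mathcomp Require Import lra.
Set Implicit Arguments. Unset Strict Implicit. Unset Printing Implicit Defensive.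

Lemma sub_card (T : finType) (X : {set T}) k :
  k <= #|X| -> exists2 Y : {set T}, Y \subset X & #|Y| = k.
Proof.
move=> le; have [m Hm] : exists m, #|X| = k + m by exists (#|X| - k); lia.
elim: m X Hm {le} => [|m IH] X Hm; first by exists X => //; rewrite Hm addn0.
have /card_gt0P [x xX] : 0 < #|X| by lia.
have := cardsD1 x X; rewrite xX => h.
case: (IH (X :\ x)) => [|Y sY cY]; first by lia.
by exists Y => //; apply: subset_trans sY (subsetDl _ _).
Qed.

Lemma card_bigcup_le (I T : finType) (P : pred I) (F : I -> {set T}) :
  #|\bigcup_(i | P i) F i| <= \sum_(i | P i) #|F i|.
Proof.
elim/big_rec2: _ => [|i m U _ le]; first by rewrite cards0.
by rewrite (leq_trans (leq_card_setU (F i) U).1) ?leq_add2l.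
Qed.

Lemma ffact_le_exp n m : n ^_ m <= n ^ m.
Proof.
elim: m n => [|m IH] n; first by [].
rewrite ffactnS expnS leq_mul2l; case: n => [|n] //=.
rewrite (leq_trans (IH n)) //; case: (posnP m) => [->|mp] //; by rewrite leq_exp2r.
Qed.

Lemma bin_le_exp n m : 'C(n, m) <= n ^ m.
Proof.
by rewrite (leq_trans _ (ffact_le_exp n m)) // -bin_ffact leq_pmulr // ?fact_gt0.
Qed.

Lemma card_setsT (T : finType) : #|{set T}| = 2 ^ #|T|.
Proof. by rewrite -[#|{set T}|]cardsT -powersetT card_powerset cardsT. Qed.

Definition Dset n (X Y : {set 'I_n}) : {set {set 'I_n * 'I_n}} :=
  [set E : {set 'I_n * 'I_n} | [disjoint E & setX X Y]].

Lemma card_Dset n (X Y : {set 'I_n}) :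
  #|Dset X Y| * 2 ^ (#|X| * #|Y|) = 2 ^ (n * n).
Proof.
have -> : Dset X Y = powerset (~: setX X Y).
  apply/setP => E0; rewrite /Dset !inE subsets_disjoint setCK //.
rewrite card_powerset -expnD -cardsX addnC cardsC card_prod card_ord //.
Qed.
Definition A0 n (S : {set vtx n}) : {set 'I_n} := [set i | (inl i : vtx n) \in S].
Definition B0 n (S : {set vtx n}) : {set 'I_n} := [set j | (inr j : vtx n) \in S].

Lemma out_bound n (M : {perm 'I_n}) E (S : {set vtx n}) :
  out_edges (gadj M E) S <= n + #|B0 S| * #|~: A0 S|.
Proof.
pose f1 := fun i : 'I_n => ((inl i : vtx n), (inr (M i) : vtx n)).
pose f2 := fun p : 'I_n * 'I_n => ((inr p.1 : vtx n), (inl p.2 : vtx n)).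
rewrite /out_edges.
have sub : [set p : vtx n * vtx n | [&& gadj M E p.1 p.2, p.1 \in S & p.2 \notin S]]
   \subset (f1 @: setT) :|: (f2 @: setX (B0 S) (~: A0 S)).
  apply/subsetP => -[u v]; rewrite !inE /=.
  case: u => [i|j]; case: v => [i'|j'] //=.
    case/and3P => /eqP <- _ _; rewrite imset_f //.
  case/and3P => _ jS iS; apply/orP; right.
  by apply/imsetP; exists (j, i'); rewrite // !inE jS iS.
apply: (leq_trans (subset_leq_card sub)).
apply: (leq_trans (leq_card_setU _ _).1).
apply: leq_add.
  by rewrite (leq_trans (leq_imset_card _ _)) // cardsT card_ord.
by rewrite (leq_trans (leq_imset_card _ _)) // cardsX.
Qed.

Definition Q1 n (M : {perm 'I_n}) (S : {set vtx n}) : {set 'I_n} :=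
  [set i | ((inl i : vtx n) \notin S) && ((inr (M i) : vtx n) \in S)].

Lemma in_bound1 n (M : {perm 'I_n}) E (S : {set vtx n}) :
  #|Q1 M S| <= in_edges (gadj M E) S.
Proof.
pose f1 := fun i : 'I_n => ((inl i : vtx n), (inr (M i) : vtx n)).
rewrite -(card_in_imset (f := f1)); last by move=> i j _ _ [].
apply: subset_leq_card; apply/subsetP => p /imsetP [i]; rewrite !inE => /andP [h1 h2] ->.
by rewrite /= h1 h2 /= eqxx.
Qed.

Lemma in_bound2 n (M : {perm 'I_n}) E (S : {set vtx n}) :
  #|E :&: setX (~: B0 S) (A0 S)| <= in_edges (gadj M E) S.
Proof.
pose f2 := fun p : 'I_n * 'I_n => ((inr p.1 : vtx n), (inl p.2 : vtx n)).
rewrite -(card_in_imset (f := f2)); last by move=> [i j] [i' j'] _ _ [-> ->].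
apply: subset_leq_card; apply/subsetP => p /imsetP [[j i]]; rewrite !inE /= => /and3P [h1 h2 h3] ->.
by rewrite /= h1 h2 h3.
Qed.

Lemma q1_bound n (M : {perm 'I_n}) (S : {set vtx n}) :
  #|B0 S| <= #|Q1 M S| + #|A0 S|.
Proof.
have sub : B0 S \subset (M @: Q1 M S) :|: (M @: A0 S).
  apply/subsetP => j; rewrite !inE => jS.
  have ej : j = M ((M^-1)%g j) by rewrite permKV.
  case iS: ((inl ((M^-1)%g j) : vtx n) \in S).
    by apply/orP; right; rewrite ej imset_f // inE.
  by apply/orP; left; rewrite ej imset_f // inE iS -ej jS.
apply: (leq_trans (subset_leq_card sub)).
apply: (leq_trans (leq_card_setU _ _).1).
by apply: leq_add; apply: leq_imset_card.
Qed.
Lemma arith1 n a : 16 <= n -> 1 <= a <= n -> (n - a) * a < 3 * n -> a <= 3 \/ n - 3 <= a.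
Proof.
move=> h1 /andP [h2 h3] h4.
case: (leqP a 3) => [|h5]; [by left|right].
case: (leqP (n-3) a) => // h6.
have : 0 <= (n - a - 4) * (a - 4) by [].
nia.
Qed.

Lemma arith2 n a a' b b' s e y0 I : 1 <= n ->
 a + a' = n -> b + b' = n -> b <= s + a -> a <= y0 + e -> b' * y0 < 3 * n ->
 s <= I -> e <= I -> 1 <= I -> n + b * a' <= 8 * n * I.
Proof.
move=> n1 ha hb hs he hy hsI heI hI.
case: (leqP (b * a') (7 * n)) => h7.
  have : 8 * n <= 8 * n * I by rewrite leq_pmulr.
  lia.
case: (leqP (n + b * a') (8 * n * s)) => h8.
  have : 8 * n * s <= 8 * n * I by rewrite leq_mul2l hsI orbT.
  lia.
have hba : b * a' <= n * a' by rewrite leq_mul2r; apply/orP; right; lia.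
have s8 : 8 * s <= a'.
  have : 8 * n * s < n + n * a' by lia.
  have : n * (8 * s) < n * (1 + a') by lia.
  rewrite ltn_mul2l => /andP [_]; lia.
have hb' : 7 * a' <= 8 * b' by lia.
have a8 : 8 <= a'.
  have : 7 * n < n * a' by lia.
  rewrite -[7 * n]mulnC ltn_mul2l => /andP [_]; lia.
have hbb : 49 * n < 8 * (b * b').
  have : 7 * (b * a') <= b * (8 * b') by rewrite mulnCA leq_mul2l hb' orbT.
  lia.
have hby : 4 * y0 < 3 * b.
  rewrite ltnNge; apply/negP => c.
  have : 3 * b * b' <= 4 * y0 * b' by rewrite leq_mul2r c orbT.
  nia.
have h4 : 4 * (s + e) >= 1 + b by lia.
have hnb : n * (1 + b) <= n * (4 * (s + e)).
  by rewrite leq_mul2l h4 orbT.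
have : n * (s + e) <= n * (2 * I) by rewrite leq_mul2l; apply/orP; right; lia.
nia.
Qed.

Lemma nondisj (T : finType) (A B : {set T}) :
  ~~ [disjoint A & B] -> exists2 x, x \in A & x \in B.
Proof.
rewrite -setI_eq0 => /set0Pn [x]; rewrite inE => /andP [h1 h2]; by exists x.
Qed.

Lemma y0_lemma n (E : {set 'I_n * 'I_n}) (X Y : {set 'I_n}) :
  (forall X Y : {set 'I_n}, 3 * n <= #|X| * #|Y| -> ~~ [disjoint E & setX X Y]) ->
  exists y0, #|X| * y0 < 3 * n /\ #|Y| <= y0 + #|E :&: setX X Y|.
Proof.
move=> H1.
pose Y0 := [set i in Y | [forall j in X, (j, i) \notin E]].
exists #|Y0|; split.
  rewrite ltnNge; apply/negP => h.
  case: (nondisj (H1 _ _ h)) => [[j i]] jE; rewrite in_setX => /andP [jX].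
  rewrite inE => /andP [iY /forall_inP F].
  by have := F j jX; rewrite jE.
have sub : Y \subset Y0 :|: ((fun p : 'I_n * 'I_n => p.2) @: (E :&: setX X Y)).
  apply/subsetP => i iY.
  case: (boolP [forall j in X, (j, i) \notin E]) => h.
    by rewrite in_setU inE iY h.
  move/forall_inPn: h => [j jX]; rewrite negbK => jE.
  rewrite in_setU; apply/orP; right; apply/imsetP; exists (j, i) => //.
  by rewrite in_setI jE in_setX jX iY.
apply: (leq_trans (subset_leq_card sub)).
apply: (leq_trans (leq_card_setU _ _).1).
by rewrite leq_add2l leq_imset_card.
Qed.


Lemma in_pos n (M : {perm 'I_n}) (E : {set 'I_n * 'I_n}) (S : {set vtx n}) :
  16 <= n ->
  (forall X Y : {set 'I_n}, 3 * n <= #|X| * #|Y| -> ~~ [disjoint E & setX X Y]) ->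
  (forall (l : 'I_n) (X : {set 'I_n}), #|X| = n - 3 -> ~~ [disjoint E & setX X [set l]]) ->
  (forall (r : 'I_n) (Y : {set 'I_n}), #|Y| = n - 3 -> ~~ [disjoint E & setX [set r] Y]) ->
  S != set0 -> S != setT -> 0 < in_edges (gadj M E) S.
Proof.
move=> n16 H1 H2 H3 nz nT.
have hA := cardsC (A0 S); rewrite card_ord in hA.
have hB := cardsC (B0 S); rewrite card_ord in hB.
have nS : 0 < #|A0 S| \/ 0 < #|B0 S|.
  case/set0Pn: nz => -[i|i] iS; [left|right]; apply/card_gt0P; exists i; by rewrite inE.
have nT' : 0 < #|~: A0 S| \/ 0 < #|~: B0 S|.
  have [v vS] : exists v, v \notin S.
    apply/existsP; apply: contraR nT => /existsPn h; apply/eqP/setP => v.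
    by rewrite inE; have := h v; rewrite negbK.
  case: v vS => [i|i] iS; [left|right]; apply/card_gt0P; exists i; by rewrite !inE.
rewrite lt0n; apply/negP => /eqP I0.
have q0 : #|Q1 M S| = 0 by have := in_bound1 M E S; lia.
have e0 : #|E :&: setX (~: B0 S) (A0 S)| = 0.
  by apply/eqP; rewrite -leqn0 -I0; exact: in_bound2.
have epos : forall j i, j \in ~: B0 S -> i \in A0 S -> (j, i) \in E -> False.
  move=> j i hj hi hE.
  suff : 0 < #|E :&: setX (~: B0 S) (A0 S)| by rewrite e0.
  by apply/card_gt0P; exists (j, i); rewrite in_setI hE in_setX hj hi.
have hq := q1_bound M S.
case: (leqP (3 * n) (#|~: B0 S| * #|A0 S|)) => h3.
  case: (nondisj (H1 _ _ h3)) => [[j i]] hE; rewrite in_setX => /andP [hj hi].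
  exact: (epos j i hj hi hE).
have h4 : (n - #|A0 S|) * #|A0 S| < 3 * n.
  apply: leq_ltn_trans h3; rewrite leq_mul2r; apply/orP; right; lia.
have := @arith1 n #|A0 S| n16; case.
- by apply/andP; split; lia.
- exact: h4.
- move=> ha.
  have /card_gt0P [l hl] : 0 < #|A0 S| by lia.
  have : n - 3 <= #|~: B0 S| by lia.
  case/sub_card => X sX cX.
  case: (nondisj (H2 l X cX)) => [[j i]] hE; rewrite in_setX in_set1 => /andP [hj /eqP ei].
  rewrite ei in hE.
  exact: (epos j l (subsetP sX j hj) hl hE).
- move=> ha.
  case: (posnP #|~: B0 S|) => hb'; first by lia.
  have /card_gt0P [r hr] := hb'.
  have : n - 3 <= #|A0 S| by lia.
  case/sub_card => Y sY cY.
  case: (nondisj (H3 r Y cY)) => [[j i]] hE; rewrite in_setX in_set1 => /andP [/eqP ej hi].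
  rewrite ej in hE.
  exact: (epos r i hr (subsetP sY i hi) hE).
Qed.

Lemma good_balanced n (M : {perm 'I_n}) (E : {set 'I_n * 'I_n}) :
  16 <= n ->
  (forall X Y : {set 'I_n}, 3 * n <= #|X| * #|Y| -> ~~ [disjoint E & setX X Y]) ->
  (forall (l : 'I_n) (X : {set 'I_n}), #|X| = n - 3 -> ~~ [disjoint E & setX X [set l]]) ->
  (forall (r : 'I_n) (Y : {set 'I_n}), #|Y| = n - 3 -> ~~ [disjoint E & setX [set r] Y]) ->
  balanced (gadj M E) (8 * n).
Proof.
move=> n16 H1 H2 H3.
apply/andP; split.
  apply/forallP => u; apply/forallP => v.
  pose S := [set w | connect (gadj M E) w v].
  have vS : v \in S by rewrite inE connect0.
  case: (S =P setT) => [ST | /eqP nT].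
    have uS : u \in S by rewrite ST inE.
    by move: uS; rewrite inE.
  have nz : S != set0 by apply/set0Pn; exists v.
  have := in_pos M n16 H1 H2 H3 nz nT.
  rewrite /in_edges => /card_gt0P [[w x]]; rewrite inE /= => /and3P [ewx wS xS].
  move: xS wS; rewrite !inE => xv.
  by rewrite (connect_trans (connect1 ewx) xv).
apply/forallP => S; apply/implyP => nz; apply/implyP => nT.
have hA := cardsC (A0 S); rewrite card_ord in hA.
have hB := cardsC (B0 S); rewrite card_ord in hB.
have [y0 [hy1 hy2]] := y0_lemma (~: B0 S) (A0 S) H1.
apply: (leq_trans (out_bound M E S)).
apply: (@arith2 n #|A0 S| #|~: A0 S| #|B0 S| #|~: B0 S| #|Q1 M S|
          #|E :&: setX (~: B0 S) (A0 S)| y0).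
- lia.
- exact: hA.
- exact: hB.
- exact: q1_bound.
- exact: hy2.
- exact: hy1.
- exact: in_bound1.
- exact: in_bound2.
- exact: (in_pos M n16 H1 H2 H3 nz nT).
Qed.
Lemma poly_exp n : 2^24 <= n -> 32 * n^5 <= 2^n.
Proof.
move=> hn.
have [K hK1 hK2] : exists2 K, 32 * 6^5 <= K & 2^24 = 16 * K.
  exists (2^20); last by rewrite -[24]/(4+20) expnD.
  rewrite -[32]/(2^5) -[20]/(5+15) expnD leq_mul2l; apply/orP; right.
  by rewrite -[15]/(3*5) expnM leq_exp2r.
move: hK2 hn => -> hn.
have hd := divn_eq n 6; have hr := ltn_pmod n (isT : 0 < 6).
move: hd hr; set m := n %/ 6 => hd hr.
have hn6 : n < 6 * (m + 1) by lia.
have hm : K <= m + 1 by lia.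
have e1 : n^5 <= 6^5 * (m+1)^5 by rewrite -expnMn leq_exp2r //; lia.
have e2 : m + 1 <= 2^m by rewrite addn1; exact: ltn_expl.
apply: (leq_trans (leq_mul (leqnn 32) e1)).
rewrite mulnA.
apply: (leq_trans (leq_mul hK1 (leqnn _))).
apply: (leq_trans (leq_mul hm (leqnn _))).
rewrite -expnS.
apply: (leq_trans (_ : _ <= (2^m)^6)); first by rewrite leq_exp2r.
rewrite -expnM leq_pexp2l //; lia.
Qed.

Definition Good n (E : {set 'I_n * 'I_n}) : bool :=
  [&& [forall p : {set 'I_n} * {set 'I_n},
        (3 * n <= #|p.1| * #|p.2|) ==> ~~ [disjoint E & setX p.1 p.2]],
      [forall p : 'I_n * {set 'I_n},
        (#|p.2| == n - 3) ==> ~~ [disjoint E & setX p.2 [set p.1]]] &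
      [forall p : 'I_n * {set 'I_n},
        (#|p.2| == n - 3) ==> ~~ [disjoint E & setX [set p.1] p.2]]].

Definition B1 n := \bigcup_(p : {set 'I_n} * {set 'I_n} | 3 * n <= #|p.1| * #|p.2|) Dset p.1 p.2.
Definition B2 n := \bigcup_(p : 'I_n * {set 'I_n} | #|p.2| == n - 3) Dset p.2 [set p.1].
Definition B3 n := \bigcup_(p : 'I_n * {set 'I_n} | #|p.2| == n - 3) Dset [set p.1] p.2.

Lemma good_bal n (M : {perm 'I_n}) (E : {set 'I_n * 'I_n}) :
  16 <= n -> Good E -> balanced (gadj M E) (8 * n).
Proof.
move=> n16 /and3P [/forallP G1 /forallP G2 /forallP G3].
apply: good_balanced => //.
- by move=> X Y h; have := G1 (X, Y); rewrite /= h.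
- by move=> l X h; have := G2 (l, X); rewrite /= h eqxx.
- by move=> r Y h; have := G3 (r, Y); rewrite /= h eqxx.
Qed.

Lemma notgood_sub n : ~: [set E | @Good n E] \subset B1 n :|: B2 n :|: B3 n.
Proof.
apply/subsetP => E; rewrite !inE /Good !negb_and.
case/orP => [|/orP []] /forallPn [p]; rewrite negb_imply negbK => /andP [hc hd];
  rewrite ?in_setU.
- by apply/orP; left; apply/orP; left; apply/bigcupP; exists p => //; rewrite inE.
- by apply/orP; left; apply/orP; right; apply/bigcupP; exists p => //; rewrite inE.
- by apply/orP; right; apply/bigcupP; exists p => //; rewrite inE.
Qed.

Lemma count_B1 n : #|B1 n| * 2^(3 * n) <= 2^n * 2^n * 2^(n * n).
Proof.
apply: (leq_trans (leq_mul (card_bigcup_le _ _) (leqnn _))).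
rewrite big_distrl /=.
apply: (@leq_trans (\sum_(p : {set 'I_n} * {set 'I_n} | 3 * n <= #|p.1| * #|p.2|) 2^(n*n))).
  apply: leq_sum => p hp; rewrite -(card_Dset p.1 p.2) leq_mul2l; apply/orP; right.
  exact: leq_pexp2l.
rewrite sum_nat_cond_const leq_mul2r; apply/orP; right.
apply: (leq_trans (max_card _)).
by rewrite card_prod !card_setsT card_ord.
Qed.

Lemma card_pairs n :
  #|[set p : 'I_n * {set 'I_n} | #|p.2| == n - 3]| = n * 'C(n, n - 3).
Proof.
have -> : [set p : 'I_n * {set 'I_n} | #|p.2| == n - 3] =
          setX [set: 'I_n] [set X : {set 'I_n} | #|X| == n - 3].
  by apply/setP => -[i X]; rewrite !inE.
by rewrite cardsX cardsT card_ord card_draws card_ord.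
Qed.

Lemma count_B2 n : #|B2 n| * 2^(n - 3) <= n * 'C(n, n - 3) * 2^(n * n).
Proof.
apply: (leq_trans (leq_mul (card_bigcup_le _ _) (leqnn _))).
rewrite big_distrl /=.
apply: (@leq_trans (\sum_(p : 'I_n * {set 'I_n} | #|p.2| == n - 3) 2^(n*n))).
  apply: leq_sum => p /eqP hp; rewrite -(card_Dset p.2 [set p.1]) cards1 muln1 hp //.
by rewrite sum_nat_cond_const card_pairs.
Qed.

Lemma count_B3 n : #|B3 n| * 2^(n - 3) <= n * 'C(n, n - 3) * 2^(n * n).
Proof.
apply: (leq_trans (leq_mul (card_bigcup_le _ _) (leqnn _))).
rewrite big_distrl /=.
apply: (@leq_trans (\sum_(p : 'I_n * {set 'I_n} | #|p.2| == n - 3) 2^(n*n))).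
  apply: leq_sum => p /eqP hp; rewrite -(card_Dset [set p.1] p.2) cards1 mul1n hp //.
by rewrite sum_nat_cond_const card_pairs.
Qed.
Lemma final_arith n b1 b2 b3 C x y P : 0 < y -> x = 8 * y -> 32 * n^5 <= x ->
  2 * n <= x -> C <= n^3 ->
  b1 * (x*x*x) <= x*x*P -> b2 * y <= n*C*P -> b3 * y <= n*C*P ->
  n * (b1 + b2 + b3) <= P.
Proof.
move=> y0 xy k2 k1 hC h1 h2 h3.
have x0 : 0 < x by lia.
have g1 : 2 * n * b1 <= P.
  rewrite -(leq_pmul2r (_ : 0 < x*x*x)); last by rewrite !muln_gt0 x0.
  have -> : 2 * n * b1 * (x * x * x) = 2 * n * (b1 * (x * x * x)) by rewrite !mulnA.
  apply: (@leq_trans (2 * n * (x * x * P))); first by rewrite leq_mul2l h1 orbT.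
  apply: (@leq_trans (x * (x * x * P))); first by rewrite leq_mul2r k1 orbT.
  nia.
have n5 : 4 * (n * (n * n^3)) <= y.
  have : n * (n * n^3) = n^5 by rewrite -expnS -expnS.
  lia.
have gen : forall b, b * y <= n * C * P -> 4 * n * b <= P.
  move=> b hb.
  rewrite -(leq_pmul2r y0).
  apply: (@leq_trans (4 * n * (n * C * P))).
    by rewrite -mulnA leq_mul2l hb orbT.
  apply: (@leq_trans (4 * n * (n * n^3 * P))).
    by rewrite leq_mul2l; apply/orP; right; rewrite leq_mul2r leq_mul2l hC !orbT.
  apply: (@leq_trans (y * P)); last by rewrite mulnC.
  have -> : 4 * n * (n * n^3 * P) = 4 * (n * (n * n^3)) * P.
    by rewrite !mulnA.
  by rewrite leq_mul2r n5 orbT.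
have g2 := gen _ h2; have g3 := gen _ h3.
lia.
Qed.

Import Order.TTheory GRing.Theory Num.Theory.

Theorem lemma7 :
  exists n0 : nat, forall n : nat, (n0 <= n)%N ->
    forall M : {perm 'I_n},
      (1 - (n%:R)^-1 <= prob_E (fun E => balanced (gadj M E) (8 * n)) :> rat)%R.
Proof.
exists (2^24) => n hn M.
have n16 : 16 <= n by apply: leq_trans hn; rewrite -[16]/(2^4) leq_pexp2l.
have key := poly_exp hn.
have hP : #|{set 'I_n * 'I_n}| = 2 ^ (n * n) by rewrite card_setsT card_prod card_ord.
set G := [set E | @Good n E].
set g := #|[set E | balanced (gadj M E) (8 * n)]|.
have hGB : #|G| <= g.
  apply: subset_leq_card; apply/subsetP => E; rewrite !inE; exact: good_bal.
have hC := cardsC G; rewrite hP in hC.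
have hbad : #|~: G| <= #|B1 n| + #|B2 n| + #|B3 n|.
  apply: (leq_trans (subset_leq_card (notgood_sub n))).
  apply: (leq_trans (leq_card_setU _ _).1); rewrite leq_add2r; exact: (leq_card_setU _ _).1.
have hC3 : 'C(n, n - 3) <= n ^ 3 by rewrite bin_sub ?bin_le_exp //; lia.
have ex3 : 2 ^ (3 * n) = 2 ^ n * 2 ^ n * 2 ^ n.
  by rewrite -[3]/(1 + 1 + 1) !mulnDl mul1n !expnD.
have ex8 : 2 ^ n = 8 * 2 ^ (n - 3).
  by rewrite -[8]/(2 ^ 3) -expnD subnKC //; lia.
have k1 : 2 * n <= 2 ^ n.
  apply: leq_trans key.
  have : n <= n ^ 5.
    by case: n {hn hC hGB hbad hC3 ex3 ex8 G g hP n16 M} => // n; rewrite -{1}(expn1 n.+1) leq_pexp2l.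
  lia.
have c1 := count_B1 n; rewrite ex3 in c1.
have hnb : n * (#|B1 n| + #|B2 n| + #|B3 n|) <= 2 ^ (n * n).
  apply: (@final_arith n _ _ _ ('C(n, n - 3)) (2 ^ n) (2 ^ (n - 3))) => //.
  - by rewrite expn_gt0.
  - exact: count_B2.
  - exact: count_B3.
have hfin : n * 2 ^ (n * n) <= 2 ^ (n * n) + n * g.
  have e : n * 2 ^ (n * n) = n * #|G| + n * #|~: G| by rewrite -hC mulnDr.
  have : n * #|~: G| <= n * (#|B1 n| + #|B2 n| + #|B3 n|) by rewrite leq_mul2l hbad orbT.
  have : n * #|G| <= n * g by rewrite leq_mul2l hGB orbT.
  lia.
rewrite /prob_E -/g hP.
rewrite ler_pdivlMr; last by rewrite ltr0n expn_gt0.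
have hr : (n%:R * (2 ^ (n * n))%:R <= (2 ^ (n * n))%:R + n%:R * g%:R :> rat)%R.
  by rewrite -!natrM -natrD ler_nat.
have nz : (n%:R : rat) != 0%R by rewrite pnatr_eq0; lia.
rewrite -(ler_pM2l (x := n%:R)); last by rewrite ltr0n; lia.
rewrite mulrBl mul1r mulrBr mulrA mulfV // mul1r.
lra.
Qed.
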